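(* Let $V$ be a complex Hermitian vector space of dimension $N$ with a fixed orthonormal basis $e_1,\ldots,e_N$. For $S\subset\{1,\ldots,N\}$ let $\mathcal L_S=\mathrm{span}\{e_i\}_{i\in S}$, and let $\mathcal L_S^*\subset\mathcal L_S$ be the set of vectors all of whose coordinates with respect to $\{e_i\}_{i\in S}$ are non-zero. Let $K,M$ be positive integers with $K\le N-M$. Then for any $w\in\mathcal L^*_{\{1,\ldots,K\}}$, a generic $M$-dimensional linear subspace $\mathcal L\in\mathrm{Gr}_w(M,V)$ satisfies: (1) $\mathcal L\cap\mathcal L_{\{1,\ldots,K\}}$ is the line spanned by $w$; (2) $\mathcal L\cap\mathcal L_S=\{0\}$ for every $S\subset\{1,\ldots,N\}$ with $|S|=K$ and $S\ne\{1,\ldots,K\}$.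
   Context: $\mathrm{Gr}_w(M,V)$ denotes the subvariety of the Grassmannian of $M$-dimensional linear subspaces of $V$ consisting of those subspaces containing $w$. ''Generic'' means: for all $\mathcal L$ outside a proper algebraic (Zariski-closed) subset of $\mathrm{Gr}_w(M,V)$. *)

(* Defs.v *)
From HB Require Import structures.
From mathcomp Require Import all_boot all_order all_algebra.
From mathcomp Require Import Rstruct complex.
From mathcomp Require Import mpoly.

Set Implicit Arguments.
Unset Strict Implicit.
Unset Printing Implicit Defensive.

Import GRing.Theory.
Local Open Scope ring_scope.

Definition CC : fieldType := (Rdefinitions.R)[i].

(* V = C^N, vectors are row vectors 'rV[CC]_N, coordinates w.r.t. the
   standard (orthonormal) basis e_0, ..., e_{N-1}.  An M-dimensional linear
   subspace L of V is represented by a full-row-rank M x N matrix B whose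
   rows form a basis of L (L = row space of B). *)

Definition LS (N : nat) (S : {set 'I_N}) : 'M[CC]_N :=
  diag_mx (\row_i (if i \in S then 1 else 0)).

Definition in_LS_star (N : nat) (S : {set 'I_N}) (v : 'rV[CC]_N) : Prop :=
  (v <= LS S)%MS /\ (forall i, i \in S -> v 0 i != 0).

(* The index set {1,...,K} of the paper, shifted to {0,...,K-1}. *)
Definition first_set (N K : nat) : {set 'I_N} := [set i : 'I_N | (i < K)%N].

(* Points of Gr_w(M,V): full-row-rank M x N matrices whose row space contains
   w.  (Two matrices represent the same point iff they have the same row
   space; all predicates below only depend on the row space.) *)
Definition in_Grw (M N : nat) (w : 'rV[CC]_N) (B : 'M[CC]_(M, N)) : Prop :=
  row_free B /\ (w <= B)%MS.

(* Plücker coordinates are indexed by all subsets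
   of 'I_N (via enum_val); those with #|I| <> M are identically zero and play
   no role. *)
Definition minor (M N : nat) (B : 'M[CC]_(M, N)) (I : {set 'I_N}) : CC :=
  if #|I| == M then
    \det (\matrix_(i < M, j < M) nth 0 [seq B i k | k <- enum I] j)
  else 0.

Definition nPl (N : nat) : nat := #|{set 'I_N}|.

Definition plucker (M N : nat) (B : 'M[CC]_(M, N)) : 'I_(nPl N) -> CC :=
  fun k => minor B (enum_val k).

(* Zariski-closed subsets of Gr_w(M,V) (for the Zariski topology induced from
   the Plücker embedding of Gr(M,V) into projective space): common zero loci,
   on Gr_w(M,V), of a family of homogeneous polynomials in the Plücker
   coordinates. *)
Definition zariski_closed_in_Grw (M N : nat) (w : 'rV[CC]_N)
    (Z : 'M[CC]_(M, N) -> Prop) : Prop :=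
  exists F : {mpoly CC[nPl N]} -> Prop,
    (forall p, F p -> exists d, p \is d.-homog) /\
    (forall B, in_Grw w B ->
       (Z B <-> (forall p, F p -> p.@[plucker B] = 0))).

Definition generic_in_Grw (M N : nat) (w : 'rV[CC]_N)
    (P : 'M[CC]_(M, N) -> Prop) : Prop :=
  exists Z : 'M[CC]_(M, N) -> Prop,
    [/\ zariski_closed_in_Grw w Z,
        (exists B, in_Grw w B /\ ~ Z B) &
        (forall B, in_Grw w B -> ~ Z B -> P B)].

(* Main.v *)
Require Import Defs.
From HB Require Import structures.
From mathcomp Require Import all_boot all_order all_algebra.
From mathcomp Require Import Rstruct complex.
From mathcomp Require Import mpoly.
From mathcomp Require Import zify.
Set Implicit Arguments.
Unset Strict Implicit.
Unset Printing Implicit Defensive.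
Import GRing.Theory Num.Theory.
Local Open Scope ring_scope.

Definition subI M N (B : 'M[CC]_(M,N)) (I : {set 'I_N}) : 'M[CC]_M :=
  \matrix_(i < M, j < M) nth 0 [seq B i k | k <- enum I] j.

Lemma minorE M N (B : 'M[CC]_(M,N)) (I : {set 'I_N}) :
  minor B I = if #|I| == M then \det (subI B I) else 0.
Proof. by []. Qed.

Lemma sub_mul M N (B : 'M[CC]_(M,N)) (I : {set 'I_N}) (x : 'rV_M) (x0 : 'I_N) (j : 'I_M) :
  #|I| = M -> (x *m subI B I) 0 j = (x *m B) 0 (nth x0 (enum I) j).
Proof.
move=> hI; rewrite !mxE; apply: eq_bigr => i _; rewrite !mxE.
rewrite (nth_map x0) // -cardE hI; exact: ltn_ord.
Qed.

Lemma vanish_iff M N (B : 'M[CC]_(M,N)) (I : {set 'I_N}) (x : 'rV_M) : #|I| = M ->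
  (x *m subI B I = 0) <-> (forall k, k \in I -> (x *m B) 0 k = 0).
Proof.
move=> hI; split.
  move=> H k kI.
  have hk : (index k (enum I) < M)%N by rewrite -hI cardE index_mem mem_enum.
  have := congr1 (fun A : 'rV[CC]_M => A 0 (Ordinal hk)) H.
  rewrite (sub_mul _ _ k) //= nth_index ?mem_enum // => ->; by rewrite mxE.
move=> H; apply/rowP => j.
have : (0 < #|I|)%N by rewrite hI; apply: leq_ltn_trans (ltn_ord j).
rewrite card_gt0 => /set0Pn [x0 _].
rewrite (sub_mul _ _ x0) // [RHS]mxE; apply: H.
rewrite -mem_enum; apply: mem_nth; rewrite -cardE hI; exact: ltn_ord.
Qed.

Lemma minor_kernel M N (B : 'M[CC]_(M,N)) (I : {set 'I_N}) (x : 'rV_M) :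
  minor B I != 0 -> (forall k, k \in I -> (x *m B) 0 k = 0) -> x = 0.
Proof.
case hI: (#|I| == M); last by rewrite minorE hI eqxx.
rewrite minorE hI => hdet H; move/eqP: hI => hI.
have hu : subI B I \in unitmx by rewrite unitmxE unitfE.
have hx := proj2 (vanish_iff B x hI) H.
 by rewrite -(mulmxK hu x) hx mul0mx.
Qed.

Lemma kernel_minor M N (B : 'M[CC]_(M,N)) (I : {set 'I_N}) : #|I| = M ->
  (forall x : 'rV_M, (forall k, k \in I -> (x *m B) 0 k = 0) -> x = 0) ->
  minor B I != 0.
Proof.
move=> hI H; rewrite minorE hI eqxx -unitfE -unitmxE -row_free_unit.
apply/inj_row_free => x hx; apply: H; exact/(vanish_iff B x hI).
Qed.

Lemma minor_row_free M N (B : 'M[CC]_(M,N)) (I : {set 'I_N}) : minor B I != 0 -> row_free B.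
Proof.
move=> hm; apply/inj_row_free => x hx; apply: (minor_kernel hm) => k _.
by rewrite hx mxE.
Qed.

Lemma minor_vec M N (B : 'M[CC]_(M,N)) (I : {set 'I_N}) (v : 'rV_N) :
  minor B I != 0 -> (v <= B)%MS -> (forall k, k \in I -> v 0 k = 0) -> v = 0.
Proof.
move=> hm /submxP [x ->] H; by rewrite (minor_kernel hm H) mul0mx.
Qed.
Lemma natCC_inj : injective (fun n : nat => (n%:R : CC)).
Proof.
move=> m n /= H; apply/eqP.
have := @eqr_nat (Rdefinitions.R)[i] m n.
move=> <-. apply/eqP. exact: H.
Qed.

Lemma poly_nonroot (p : {poly CC}) : p != 0 -> exists t, p.[t] != 0.
Proof.
move=> p0.
set rs := [seq (i%:R : CC) | i <- iota 0 (size p)].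
have Hu : uniq rs.
  rewrite map_inj_uniq ?iota_uniq //; exact: natCC_inj.
have : ~~ all (root p) rs.
  apply/negP => Hall; have := max_poly_roots p0 Hall Hu.
  by rewrite size_map size_iota ltnn.
case/allPn => t _ Ht; by exists t.
Qed.

Lemma Xhomog n (k : 'I_n) : ('X_k : {mpoly CC[n]}) \is 1.-homog.
Proof. rewrite dhomogX; apply/eqP; exact: mdeg1. Qed.

Lemma subI_lin M N (B1 B2 : 'M[CC]_(M,N)) (I : {set 'I_N}) t :
  subI (B1 + t *: B2) I = subI B1 I + t *: subI B2 I.
Proof.
apply/matrixP => i j; rewrite !mxE.
case: (ltnP j (size (enum I))) => hj.
  have x0 : 'I_N by move: hj; case: (enum I) => [|x _] // _; exact: x.
  by rewrite !(nth_map x0) // !mxE.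
by rewrite !nth_default ?size_map // mulr0 addr0.
Qed.

Lemma det_poly M (A C : 'M[CC]_M) t :
  (\det (map_mx polyC A + 'X *: map_mx polyC C)).[t] = \det (A + t *: C).
Proof.
rewrite -horner_evalE -det_map_mx; congr (\det _).
apply/matrixP => i j; rewrite !mxE /= horner_evalE. by rewrite hornerD mulrC hornerMX !hornerC mulrC.
Qed.

Definition qf M N (Bp D : 'M[CC]_(M,N)) (J : {set 'I_N}) : {poly CC} :=
  if #|J| == M then \det (map_mx polyC (subI Bp J) + 'X *: map_mx polyC (subI D J))
  else 0.

Lemma qfE M N (Bp D : 'M[CC]_(M,N)) J t : (qf Bp D J).[t] = minor (Bp + t *: D) J.
Proof.
rewrite /qf minorE; case: (_ == _); last by rewrite horner0.
by rewrite det_poly subI_lin.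
Qed.

Lemma combine M N (i0 : 'I_M) (w : 'rV[CC]_N) (Is : seq {set 'I_N}) :
  (forall I, I \in Is -> exists B : 'M[CC]_(M,N), row i0 B = w /\ minor B I != 0) ->
  exists B : 'M[CC]_(M,N), row i0 B = w /\ forall I, I \in Is -> minor B I != 0.
Proof.
elim: Is => [|I Is IH] H.
  exists (\matrix_(i, k) w 0 k); split => //.
  by apply/rowP => k; rewrite !mxE.
have [Bp [hp Hp]] : exists B : 'M[CC]_(M,N), row i0 B = w /\ forall I, I \in Is -> minor B I != 0.
  apply: IH => J hJ; apply: H; by rewrite inE hJ orbT.
have [Bq [hq Hq]] := H I (mem_head _ _).
set D := Bq - Bp.
have hq0 : forall J, J \in I :: Is -> qf Bp D J != 0.
  move=> J; rewrite inE => /orP [/eqP -> | hJ].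
    apply/negP => /eqP h0; move: Hq; have := qfE Bp D I 1.
    by rewrite h0 horner0 scale1r /D addrC subrK => <-; rewrite eqxx.
  apply/negP => /eqP h0; move: (Hp J hJ); have := qfE Bp D J 0.
  by rewrite h0 horner0 scale0r addr0 => <-; rewrite eqxx.
have hQ : \prod_(J <- I :: Is) qf Bp D J != 0.
  rewrite prodf_seq_neq0; apply/allP => J hJ /=; exact: hq0.
have [t ht] := poly_nonroot hQ.
exists (Bp + t *: D); split.
  by rewrite linearD linearZ /= /D linearB /= hp hq subrr scaler0 addr0.
move=> J hJ; move: ht; rewrite horner_prod prodf_seq_neq0 => /allP /(_ J hJ) /=.
by rewrite qfE.
Qed.

Lemma ex_subset (T : finType) (X : {set T}) m : (m <= #|X|)%N ->
  exists J : {set T}, J \subset X /\ #|J| = m.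
Proof.
elim: m => [|m IH] hm.
  by exists set0; rewrite sub0set cards0.
have [J [hJ hc]] := IH (ltnW hm).
have : (0 < #|X :\: J|)%N.
  by rewrite cardsD (setIidPr hJ) hc subn_gt0.
rewrite card_gt0 => /set0Pn [x]; rewrite inE => /andP [xJ xX].
exists (x |: J); split; first by rewrite subUset sub1set xX hJ.
by rewrite cardsU1 xJ hc.
Qed.

Lemma LS_sub N (S : {set 'I_N}) (v : 'rV[CC]_N) :
  (v <= LS S)%MS <-> forall k, k \notin S -> v 0 k = 0.
Proof.
split.
  case/submxP => x -> k hk; rewrite /LS mul_mx_diag !mxE.
  by rewrite (negbTE hk) mulr0.
move=> H; have -> : v = v *m LS S; last exact: submxMl.
apply/rowP => k; rewrite /LS mul_mx_diag !mxE.
case: ifP => hk; first by rewrite mulr1.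
by rewrite mulr0 H ?hk.
Qed.

Lemma card_first N K : (K <= N)%N -> #|first_set N K| = K.
Proof.
move=> hKN.
have -> : first_set N K = [set widen_ord hKN i | i : 'I_K].
  apply/setP => k; rewrite inE; apply/idP/imsetP.
    by move=> hk; exists (Ordinal hk) => //; apply: val_inj.
  by case=> i _ ->; rewrite /= ltn_ord.
rewrite card_imset ?card_ord //.
by move=> x y /(congr1 val) /= /val_inj.
Qed.

Lemma witness M' N (I : {set 'I_N}) (a : 'I_N) (w : 'rV[CC]_N) :
  #|I| = M'.+1 -> a \in I -> w 0 a != 0 ->
  exists B : 'M[CC]_(M'.+1, N), row ord0 B = w /\ minor B I != 0.
Proof.
move=> hI aI wa.
set s := enum (I :\ a).
have hs : size s = M' by rewrite -cardE; move: hI; rewrite (cardsD1 a) aI => -[].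
have us : uniq s := enum_uniq _.
pose B := \matrix_(i < M'.+1, k < N)
  if unlift ord0 i is Some i' then (k == nth a s i')%:R else w 0 k.
exists B; split.
  by apply/rowP => k; rewrite !mxE unlift_none.
apply: kernel_minor => // x Hx.
have HE : forall k, (x *m B) 0 k =
   x 0 0 * w 0 k + \sum_(i < M') x 0 (lift ord0 i) * (k == nth a s i)%:R.
  move=> k; rewrite mxE big_ord_recl !mxE unlift_none; congr (_ + _).
  by apply: eq_bigr => i _; rewrite !mxE liftK.
have hsI : forall i : 'I_M', nth a s i \in I :\ a.
  move=> i; rewrite -mem_enum; apply: mem_nth; by rewrite hs.
have x00 : x 0 0 = 0.
  have := Hx a aI; rewrite HE big1 ?addr0.
    by move/eqP; rewrite mulf_eq0 (negbTE wa) orbF => /eqP.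
  move=> i _; have := hsI i; rewrite !inE => /andP [hne _].
  by rewrite eq_sym (negbTE hne) mulr0.
apply/rowP => j; rewrite [RHS]mxE.
case: (unliftP ord0 j) => [i ->|->]; last exact: x00.
have := hsI i; rewrite !inE => /andP [_ hiI].
have := Hx _ hiI; rewrite HE x00 mul0r add0r (bigD1 i) //= eqxx mulr1 big1 ?addr0 //.
move=> i' hi'; rewrite (nth_uniq a _ _ us) ?hs ?ltn_ord //.
by rewrite eq_sym (inj_eq val_inj) (negbTE hi') mulr0.
Qed.

Lemma homog_prodX n (P : pred 'I_n) :
  exists d, (\prod_(k | P k) 'X_k : {mpoly CC[n]}) \is d.-homog.
Proof.
apply/homogP; apply: (big_ind (fun q : {mpoly CC[n]} => q \is homog mdeg)).
- by apply/homogP; exists 0%N; exact: dhomog1.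
- move=> x y /homogP [d1 h1] /homogP [d2 h2]; apply/homogP; exists (d1 + d2)%N.
  exact: dhomogM.
- move=> k _; apply/homogP; exists 1%N; exact: Xhomog.
Qed.

Unset Implicit Arguments.

Theorem lemma3p8 (N K M : nat) (hK : (0 < K)%N) (hM : (0 < M)%N)
    (hKNM : (K <= N - M)%N) (w : 'rV[CC]_N)
    (hw : in_LS_star (first_set N K) w) :
  generic_in_Grw w (fun B : 'M[CC]_(M, N) =>
    (forall v : 'rV[CC]_N,
       (v <= B)%MS /\ (v <= LS (first_set N K))%MS <-> exists c : CC, v = c *: w)
    /\
    (forall S : {set 'I_N}, #|S| = K -> S <> first_set N K ->
       forall v : 'rV[CC]_N, (v <= B)%MS -> (v <= LS S)%MS -> v = 0)).
Proof.
case: M hM hKNM => [//|M'] _ hKNM.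
set A := first_set N K.
have hKN : (K <= N)%N by apply: leq_trans hKNM (leq_subr _ _).
have hA : #|A| = K by exact: card_first.
have [hwA hwnz] := hw.
pose good (I : {set 'I_N}) := (#|I| == M'.+1) && (I :&: A != set0).
pose p : {mpoly CC[nPl N]} := \prod_(k | good (enum_val k)) 'X_k.
have hev : forall B : 'M[CC]_(M'.+1, N),
    p.@[plucker B] != 0 <-> forall I, good I -> minor B I != 0.
  move=> B; rewrite /p rmorph_prod /=.
  under eq_bigr => k _ do rewrite mevalXU.
  split.
    move/prodf_neq0 => H I gI; have := H (enum_rank I); rewrite /plucker enum_rankK.
    by apply.
  move=> H; apply/prodf_neq0 => k gk; exact: H.
have hN0 : (0 < N)%N by apply: leq_trans hK hKN.
pose j0 : 'I_N := Ordinal hN0.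
have j0A : j0 \in A by rewrite inE.
have hC : (M' <= #|~: A|)%N.
  have := cardsC A; rewrite hA card_ord => hc.
  have -> : #|~: A| = (N - K)%N by rewrite -[in RHS]hc addKn.
  lia.
have [J0 [hJ0 cJ0]] := ex_subset hC.
pose I0 := j0 |: J0.
have j0J0 : j0 \notin J0.
  apply/negP => /(subsetP hJ0); rewrite inE => /negP; apply; exact: j0A.
have gI0 : good I0.
  rewrite /good /I0 cardsU1 j0J0 cJ0 eqxx /=.
  by apply/set0Pn; exists j0; rewrite in_setI in_setU1 eqxx j0A.
have HP : forall B : 'M[CC]_(M'.+1, N), in_Grw w B ->
    (forall I, good I -> minor B I != 0) ->
    (forall v : 'rV[CC]_N,
       (v <= B)%MS /\ (v <= LS A)%MS <-> exists c : CC, v = c *: w)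
    /\
    (forall S : {set 'I_N}, #|S| = K -> S <> A ->
       forall v : 'rV[CC]_N, (v <= B)%MS -> (v <= LS S)%MS -> v = 0).
  move=> B [_ wB] Hm; split.
    move=> v; split; last first.
      by case=> c ->; split; apply: scalemx_sub.
    case=> vB /LS_sub vA.
    have wj0 := hwnz j0 j0A.
    exists (v 0 j0 / w 0 j0).
    apply/eqP; rewrite -subr_eq0; apply/eqP.
    apply: (minor_vec (Hm _ gI0)).
      rewrite -scaleNr; apply: addmx_sub => //; exact: scalemx_sub.
    move=> k; rewrite !inE => /orP [/eqP -> | kJ].
      by rewrite !mxE -mulrA mulVf // mulr1 subrr.
    have kA : k \notin A by have := subsetP hJ0 k kJ; rewrite inE.
    move/LS_sub: hwA => hwA'.
    by rewrite !mxE (vA k kA) (hwA' k kA) mulr0 subrr.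
  move=> S hS hSA v vB /LS_sub vS.
  have : ~~ (A \subset S).
    apply/negP => hsub; apply: hSA; apply/setP => x.
    by have := subset_cardP (etrans hA (esym hS)) hsub => /(_ x) ->.
  case/subsetPn => a aA aS.
  have hX : (M' <= #|~: S :\ a|)%N.
    have := cardsC S; rewrite hS card_ord => hc.
    have := cardsD1 a (~: S); rewrite inE aS /= => hc2.
    have : #|~: S| = (N - K)%N by rewrite -[in RHS]hc addKn.
    move=> hc3; rewrite hc3 in hc2.
    lia.
  have [J [hJ cJ]] := ex_subset hX.
  have aJ : a \notin J by apply/negP => /(subsetP hJ); rewrite !inE eqxx.
  have gI : good (a |: J).
    rewrite /good cardsU1 aJ cJ eqxx /=.
    by apply/set0Pn; exists a; rewrite in_setI in_setU1 eqxx aA.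
  apply: (minor_vec (Hm _ gI)) => //.
  move=> k; rewrite !inE => /orP [/eqP -> | kJ]; first exact: vS.
  apply: vS; have := subsetP hJ k kJ; rewrite !inE => /andP [_ ->] //.
have [B0 [hrow Hm0]] : exists B : 'M[CC]_(M'.+1, N),
    row ord0 B = w /\ forall I, I \in enum good -> minor B I != 0.
  apply: combine => I; rewrite mem_enum => /andP [/eqP cI /set0Pn [a]].
  rewrite inE => /andP [aI aA].
  exact: witness cI aI (hwnz a aA).
have Hm0' : forall I, good I -> minor B0 I != 0.
  by move=> I gI; apply: Hm0; rewrite mem_enum.
have G0 : in_Grw w B0.
  split; first exact: (minor_row_free (Hm0' _ gI0)).
  rewrite -hrow; exact: row_sub.
exists (fun B => p.@[plucker B] = 0); split.
- exists (fun q => q = p); split.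
    move=> q ->; exact: homog_prodX.
  move=> B _; split; first by move=> h q ->.
  by move=> h; apply: h.
- exists B0; split => //; apply/eqP; exact/(proj2 (hev B0)).
- move=> B GB hZ; apply: HP => //; apply/(proj1 (hev B)); exact/eqP.
Qed.
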